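(* Consider the setting and the algorithm described in the context (with its parameters $0<\beta<2$, $\nu>0$, $0<q<1$, $\delta_0>0$, $\theta_0>0$, $\gamma_0=1$, $\varepsilon>0$). Then: (i) $\|z^{k+1}\|\le \ell+1$ for all $k\ge 0$; (ii) in every iteration, the search for the smallest $j_k\in\{0,1,2,\dots\}$ with $\theta_{k+1}>0$ terminates after finitely many steps, so the algorithm is well defined; moreover $\gamma_{k+1}\le\gamma_k$ for all $k\ge0$; (iii) there exist a constant $\gamma>0$ and an index $K_0\ge 0$ such that for all $k\ge K_0$: $\gamma_k=\gamma$, $\delta_k=\delta:=2\nu+L_{\nabla h}+\frac{2\|A\|^2}{\gamma}$, and $\|z^{k+1}\|\le\min\left(\frac{\varepsilon}{\gamma},\sqrt{\frac{2\varepsilon}{\gamma}}\right)$.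
   Context: Setting: $\mathcal{S}\subseteq\mathbb{R}^n$ is nonempty, convex and compact; $A:\mathbb{R}^n\to\mathbb{R}^s$ and $K:\mathbb{R}^n\to\mathbb{R}^p$ are linear with adjoints $A^*,K^*$ and operator norms $\|A\|,\|K\|$; $g:\mathbb{R}^s\to\mathbb{R}\cup\{+\infty\}$ is proper, convex, lower semicontinuous; $h:\mathbb{R}^n\to\mathbb{R}$ is differentiable on an open set containing $\mathcal{S}$ with $\nabla h$ Lipschitz there with constant $L_{\nabla h}$; $f:\mathbb{R}^p\to\mathbb{R}\cup\{+\infty\}$ is proper, convex, lower semicontinuous with $K(\mathcal{S})\subseteq\operatorname{int}(\operatorname{dom}f)$ and $f(Kx)>0$ for all $x\in\mathcal{S}$; $\mathcal{S}\cap A^{-1}(\operatorname{dom}g)\neq\emptyset$ and $\alpha:=\inf_{x\in\mathcal{S}}\{g(Ax)+h(x)\}>0$. Moreover $A(\mathcal{S})\subseteq\operatorname{dom}(\partial g)$ and there is $\ell>0$ with $\operatorname{dist}(0,\partial g(Ax))\le\ell$ for all $x\in\mathcal{S}$. Notation: $g^*$ is the Fenchel conjugate of $g$; $\iota_{\mathcal{S}}$ the indicator function of $\mathcal{S}$; $\operatorname{Proj}_{\mathcal{S}}$ the Euclidean projection; for a proper convex lsc $\varphi$ and $\kappa>0$, $\operatorname{prox}_{\varphi,\kappa}(x)=\arg\min_y\{\varphi(y)+\frac{1}{2\kappa}\|y-x\|^2\}$. Define $\Psi(x,z,u,\delta,\gamma):=\langle z,Ax\rangle-g^*(z)+h(x)+\iota_{\mathcal{S}}(x)+\frac{\delta}{2}\|x-u\|^2-\frac{\gamma}{2}\|z\|^2$.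 Algorithm (Adaptive FSPS): given $0<\beta<2$, $\nu>0$, $0<q<1$, $\delta_0>0$, $\theta_0>0$, $\gamma_0=1$, $\varepsilon>0$ and a starting point $(x^0,z^0,u^0)$, for $k\ge0$: choose $y^{k+1}\in\partial f(Kx^k)$; set $x^{k+1}:=\operatorname{Proj}_{\mathcal{S}}\big(u^k+\frac{\theta_k}{\delta_k}K^*y^{k+1}-\frac1{\delta_k}\nabla h(x^k)-\frac1{\delta_k}A^*z^k\big)$; set $u^{k+1}:=(1-\beta)u^k+\beta x^{k+1}$; find the smallest $j_k\in\{0,1,2,\dots\}$ such that, with $\gamma_{k,j_k}:=\gamma_kq^{j_k}$ and $z^{k+1,j_k}:=\operatorname{prox}_{g^*,1/\gamma_{k,j_k}}(Ax^{k+1}/\gamma_{k,j_k})$, one has $\theta_{k+1}:=\Psi(x^{k+1},z^{k+1,j_k},u^{k+1},\delta_k,\gamma_{k,j_k})/f(Kx^{k+1})>0$; set $\gamma_{k+1}:=\gamma_{k,j_k}$, $\delta_{k+1}:=2\nu+L_{\nabla h}+2\|A\|^2/\gamma_{k+1}$, $z^{k+1}:=z^{k+1,j_k}$; if $\|z^{k+1}\|>\min(\varepsilon/\gamma_{k+1},\sqrt{2\varepsilon/\gamma_{k+1}})$, then replace $\gamma_{k+1}$ by $\gamma_{k+1}q$ and recompute $\delta_{k+1}:=2\nu+L_{\nabla h}+2\|A\|^2/\gamma_{k+1}$. *)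

(* Defs.v *)
(* R^n is modelled by row vectors 'rV[R]_n,
   linear maps R^n -> R^s by matrices 'M[R]_(n,s) acting on the right (x |-> x *m A),
   adjoints by transposition (z |-> z *m A^T). *)
From HB Require Import structures.
From mathcomp Require Import all_boot all_order all_algebra.
From mathcomp Require Import all_classical all_reals all_analysis.
Set Implicit Arguments. Unset Strict Implicit. Unset Printing Implicit Defensive.
Import Order.TTheory GRing.Theory Num.Theory.
Import numFieldNormedType.Exports.
Local Open Scope classical_set_scope.
Local Open Scope ring_scope.

Section Defs.
Variable R : realType.

Definition dot {m : nat} (u v : 'rV[R]_m) : R := (u *m v^T) 0 0.
Definition enorm {m : nat} (v : 'rV[R]_m) : R := Num.sqrt (dot v v).

Definition opnorm {m k : nat} (A : 'M[R]_(m, k)) : R :=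
  sup [set enorm (x *m A) | x in [set x : 'rV[R]_m | enorm x <= 1]].

Definition convex_set_ {m : nat} (S : set 'rV[R]_m) : Prop :=
  forall (x y : 'rV[R]_m) (t : R), S x -> S y -> 0 <= t <= 1 -> S (t *: x + (1 - t) *: y).

Definition edom {m : nat} (phi : 'rV[R]_m -> \bar R) : set 'rV[R]_m :=
  [set x | (phi x < +oo)%E].
Definition eproper {m : nat} (phi : 'rV[R]_m -> \bar R) : Prop :=
  (exists x, (phi x < +oo)%E) /\ (forall x, phi x <> -oo%E).
Definition econvex {m : nat} (phi : 'rV[R]_m -> \bar R) : Prop :=
  forall (x y : 'rV[R]_m) (t : R), 0 < t < 1 ->
    (phi (t *: x + (1 - t) *: y)%R <= t%:E * phi x + (1 - t)%:E * phi y)%E.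
Definition elsc {m : nat} (phi : 'rV[R]_m -> \bar R) : Prop :=
  forall x (a : R), (a%:E < phi x)%E -> \forall y \near x, (a%:E < phi y)%E.

Definition subdiff {m : nat} (phi : 'rV[R]_m -> \bar R) (u z : 'rV[R]_m) : Prop :=
  phi u \is a fin_num /\ forall w, (phi u + (dot z (w - u)%R)%:E <= phi w)%E.

Definition dist0_subdiff {m : nat} (phi : 'rV[R]_m -> \bar R) (u : 'rV[R]_m) : R :=
  inf [set enorm z | z in subdiff phi u].

Definition fconj {m : nat} (phi : 'rV[R]_m -> \bar R) (z : 'rV[R]_m) : \bar R :=
  ereal_sup [set ((dot z u)%:E - phi u)%E | u in [set: 'rV[R]_m]].

Definition is_prox {m : nat} (phi : 'rV[R]_m -> \bar R) (kappa : R) (x y : 'rV[R]_m) : Prop :=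
  forall w, (phi y + ((2 * kappa)^-1 * enorm (y - x) ^+ 2)%:E
             <= phi w + ((2 * kappa)^-1 * enorm (w - x) ^+ 2)%:E)%E.

Definition is_proj {m : nat} (S : set 'rV[R]_m) (x y : 'rV[R]_m) : Prop :=
  S y /\ forall w, S w -> enorm (x - y) <= enorm (x - w).

Definition indic {m : nat} (S : set 'rV[R]_m) (x : 'rV[R]_m) : \bar R :=
  if `[< S x >] then 0%E else +oo%E.

Definition has_gradient_on {m : nat} (U : set 'rV[R]_m) (h : 'rV[R]_m -> R)
  (gradh : 'rV[R]_m -> 'rV[R]_m) : Prop :=
  forall x, U x -> differentiable h x /\ forall v, 'd h x v = dot (gradh x) v.

Definition lipschitz_on {m : nat} (U : set 'rV[R]_m) (F : 'rV[R]_m -> 'rV[R]_m) (L : R) : Prop :=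
  forall x y, U x -> U y -> enorm (F x - F y) <= L * enorm (x - y).

Definition Psi {n s : nat} (S : set 'rV[R]_n) (A : 'M[R]_(n, s))
  (g : 'rV[R]_s -> \bar R) (h : 'rV[R]_n -> R)
  (x : 'rV[R]_n) (z : 'rV[R]_s) (u : 'rV[R]_n) (delta gamma : R) : \bar R :=
  ((dot z (x *m A))%:E - fconj g z + (h x)%:E + indic S x
   + (delta / 2 * enorm (x - u) ^+ 2)%:E - (gamma / 2 * enorm z ^+ 2)%:E)%E.

Definition fsps_setting {n s p : nat} (S : set 'rV[R]_n) (A : 'M[R]_(n, s))
  (K : 'M[R]_(n, p)) (g : 'rV[R]_s -> \bar R) (h : 'rV[R]_n -> R)
  (gradh : 'rV[R]_n -> 'rV[R]_n) (L : R) (f : 'rV[R]_p -> \bar R) (ell : R) : Prop :=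
  [/\ (S !=set0) /\ convex_set_ S /\ compact S,
      eproper g /\ econvex g /\ elsc g,
      (exists U, open U /\ S `<=` U /\ has_gradient_on U h gradh
                 /\ 0 <= L /\ lipschitz_on U gradh L),
      eproper f /\ econvex f /\ elsc f
        /\ (forall x, S x -> interior (edom f) (x *m K))
        /\ (forall x, S x -> (0 < f (x *m K))%E)
      & [/\ exists x, S x /\ edom g (x *m A),
            (0 < ereal_inf [set (g (x *m A) + (h x)%:E)%E | x in S])%E,
            (forall x, S x -> exists z, subdiff g (x *m A) z),
            0 < ell
          & forall x, S x -> dist0_subdiff g (x *m A) <= ell]].

Definition fsps_pre {n s p : nat} (S : set 'rV[R]_n) (A : 'M[R]_(n, s))
  (K : 'M[R]_(n, p)) (gradh : 'rV[R]_n -> 'rV[R]_n) (f : 'rV[R]_p -> \bar R)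
  (beta : R) (xk : 'rV[R]_n) (zk : 'rV[R]_s) (uk : 'rV[R]_n) (thk dk : R)
  (y : 'rV[R]_p) (x' u' : 'rV[R]_n) : Prop :=
  [/\ subdiff f (xk *m K) y,
      is_proj S (uk + (thk / dk) *: (y *m K^T) - dk^-1 *: gradh xk
                   - dk^-1 *: (zk *m A^T)) x'
    & u' = (1 - beta) *: uk + beta *: x'].

Definition fsps_theta {n s p : nat} (S : set 'rV[R]_n) (A : 'M[R]_(n, s))
  (K : 'M[R]_(n, p)) (g : 'rV[R]_s -> \bar R) (h : 'rV[R]_n -> R)
  (f : 'rV[R]_p -> \bar R) (x' : 'rV[R]_n) (z : 'rV[R]_s) (u' : 'rV[R]_n)
  (dk gkj : R) : \bar R :=
  (Psi S A g h x' z u' dk gkj * ((fine (f (x' *m K)))^-1)%:E)%E.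

Definition fsps_cond {n s p : nat} (S : set 'rV[R]_n) (A : 'M[R]_(n, s))
  (K : 'M[R]_(n, p)) (g : 'rV[R]_s -> \bar R) (h : 'rV[R]_n -> R)
  (f : 'rV[R]_p -> \bar R) (q : R)
  (x' u' : 'rV[R]_n) (dk gk : R) (j : nat) : Prop :=
  exists z, is_prox (fconj g) (gk * q ^+ j)^-1 ((gk * q ^+ j)^-1 *: (x' *m A)) z
         /\ (0 < fsps_theta S A K g h f x' z u' dk (gk * q ^+ j))%E.

Definition fsps_step {n s p : nat} (S : set 'rV[R]_n) (A : 'M[R]_(n, s))
  (K : 'M[R]_(n, p)) (g : 'rV[R]_s -> \bar R) (h : 'rV[R]_n -> R)
  (gradh : 'rV[R]_n -> 'rV[R]_n) (L : R) (f : 'rV[R]_p -> \bar R)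
  (beta nu q eps : R)
  (xk : 'rV[R]_n) (zk : 'rV[R]_s) (uk : 'rV[R]_n) (thk dk gk : R)
  (y : 'rV[R]_p) (x' : 'rV[R]_n) (z' : 'rV[R]_s) (u' : 'rV[R]_n)
  (j : nat) (th' d' g' : R) : Prop :=
  let gkj := gk * q ^+ j in
  [/\ fsps_pre S A K gradh f beta xk zk uk thk dk y x' u',
      fsps_cond S A K g h f q x' u' dk gk j
        /\ (forall j', (j' < j)%N -> ~ fsps_cond S A K g h f q x' u' dk gk j'),
      is_prox (fconj g) gkj^-1 (gkj^-1 *: (x' *m A)) z'
        /\ th'%:E = fsps_theta S A K g h f x' z' u' dk gkj,
      g' = (if Num.min (eps / gkj) (Num.sqrt (2 * eps / gkj)) < enorm z'
            then gkj * q else gkj)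
    & d' = 2 * nu + L + 2 * opnorm A ^+ 2 / g'].

Definition fsps_run_upto {n s p : nat} (S : set 'rV[R]_n) (A : 'M[R]_(n, s))
  (K : 'M[R]_(n, p)) (g : 'rV[R]_s -> \bar R) (h : 'rV[R]_n -> R)
  (gradh : 'rV[R]_n -> 'rV[R]_n) (L : R) (f : 'rV[R]_p -> \bar R)
  (beta nu q eps delta0 theta0 : R) (x0 : 'rV[R]_n) (z0 : 'rV[R]_s) (u0 : 'rV[R]_n)
  (x : nat -> 'rV[R]_n) (z : nat -> 'rV[R]_s) (u : nat -> 'rV[R]_n)
  (y : nat -> 'rV[R]_p) (j : nat -> nat) (theta delta gamma : nat -> R)
  (N : nat) : Prop :=
  [/\ x 0%N = x0, z 0%N = z0, u 0%N = u0,
      [/\ theta 0%N = theta0, delta 0%N = delta0 & gamma 0%N = 1]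
    & forall k, (k < N)%N ->
        fsps_step S A K g h gradh L f beta nu q eps
          (x k) (z k) (u k) (theta k) (delta k) (gamma k)
          (y k.+1) (x k.+1) (z k.+1) (u k.+1) (j k) (theta k.+1) (delta k.+1) (gamma k.+1)].

End Defs.

(* Main.v *)
Require Import Defs.
From HB Require Import structures.
From mathcomp Require Import all_boot all_order all_algebra.
From mathcomp Require Import all_classical all_reals all_analysis.
From mathcomp Require Import ring lra.
Import Order.TTheory GRing.Theory Num.Theory.
Import numFieldNormedType.Exports.
Local Open Scope classical_set_scope.
Local Open Scope ring_scope.

Set Implicit Arguments. Unset Strict Implicit. Unset Printing Implicit Defensive.


Section DotLemmas.
Variable R : realType.
Variable m : nat.
Implicit Types u v w : 'rV[R]_m.

Lemma dotE u v : dot u v = \sum_j u 0 j * v 0 j.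
Proof. by rewrite /dot !mxE; apply: eq_bigr => j _; rewrite mxE. Qed.

Lemma dotC u v : dot u v = dot v u.
Proof. by rewrite !dotE; apply: eq_bigr => j _; rewrite mulrC. Qed.

Lemma dotDl u v w : dot (u + v) w = dot u w + dot v w.
Proof. by rewrite !dotE -big_split; apply: eq_bigr => j _; rewrite mxE mulrDl. Qed.

Lemma dotDr u v w : dot w (u + v) = dot w u + dot w v.
Proof. by rewrite dotC dotDl !(dotC w). Qed.

Lemma dotZl (a : R) u v : dot (a *: u) v = a * dot u v.
Proof. by rewrite !dotE mulr_sumr; apply: eq_bigr => j _; rewrite mxE mulrA. Qed.

Lemma dotZr (a : R) u v : dot v (a *: u) = a * dot v u.
Proof. by rewrite dotC dotZl dotC. Qed.

Lemma dotNl u v : dot (- u) v = - dot u v.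
Proof. by rewrite -scaleN1r dotZl mulN1r. Qed.

Lemma dotNr u v : dot v (- u) = - dot v u.
Proof. by rewrite dotC dotNl dotC. Qed.

Lemma dotBl u v w : dot (u - v) w = dot u w - dot v w.
Proof. by rewrite dotDl dotNl. Qed.

Lemma dotBr u v w : dot w (u - v) = dot w u - dot w v.
Proof. by rewrite dotDr dotNr. Qed.

Lemma dot_ge0 u : 0 <= dot u u.
Proof. by rewrite dotE; apply: sumr_ge0 => j _; rewrite -expr2 sqr_ge0. Qed.

Lemma enorm_ge0 u : 0 <= enorm u.
Proof. exact: sqrtr_ge0. Qed.

Lemma enorm_sq u : enorm u ^+ 2 = dot u u.
Proof. by rewrite /enorm sqr_sqrtr // dot_ge0. Qed.

Lemma coord_sq_le u i : (u 0 i) ^+ 2 <= dot u u.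
Proof.
rewrite dotE (bigD1 i) //= -expr2 lerDl.
by apply: sumr_ge0 => j _; rewrite -expr2 sqr_ge0.
Qed.

Lemma enorm_lt u (r : R) : 0 <= r -> dot u u < r ^+ 2 -> enorm u < r.
Proof.
move=> r0 H; rewrite -(ltr_pXn2r (n:=2)) //; last by rewrite nnegrE enorm_ge0.
by rewrite enorm_sq.
Qed.

Lemma enorm_le_dot u v : dot u u <= dot v v -> enorm u <= enorm v.
Proof. by move=> H; rewrite /enorm ler_sqrt // dot_ge0. Qed.

Lemma dot_lt_enorm u (r : R) : enorm u < r -> dot u u < r ^+ 2.
Proof.
move=> H; rewrite -enorm_sq; rewrite ltr_pXn2r //; last first.
  by rewrite nnegrE; apply: le_trans (enorm_ge0 u) (ltW H).
by rewrite nnegrE enorm_ge0.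
Qed.

End DotLemmas.

Section More.
Variable R : realType.
Variable m : nat.
Implicit Types u v w : 'rV[R]_m.

Lemma dot_addsq u v : dot (u + v) (u + v) = dot u u + 2 * dot u v + dot v v.
Proof. rewrite dotDl !dotDr (dotC v u); lra. Qed.

Lemma dot_subsq u v : dot (u - v) (u - v) = dot u u - 2 * dot u v + dot v v.
Proof. rewrite dotBl !dotBr (dotC v u); lra. Qed.

End More.


Section Conj.
Variable R : realType.
Variable m : nat.
Variable g : 'rV[R]_m -> \bar R.
Implicit Types u v w a z : 'rV[R]_m.

Lemma fconj_ge w p : ((dot w p)%:E - g p <= fconj g w)%E.
Proof. by apply: ereal_sup_ubound; exists p. Qed.

Lemma fconj_subdiff a v : subdiff g a v -> fconj g v = ((dot v a)%:E - g a)%E.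
Proof.
case=> ga H; apply/eqP; rewrite eq_le; apply/andP; split; last exact: fconj_ge.
apply: ub_ereal_sup => _ [u _ <-].
have := H u; rewrite -(fineK ga); case: (g u) => [r| |] /=.
- rewrite -EFinD !lee_fin dotBr => Hr; lra.
- by move=> _; rewrite addeNy leNye.
- by rewrite -EFinD leeNy_eq.
Qed.

Lemma quad_id (gam : R) w a : gam != 0 ->
  (2 * gam^-1)^-1 * enorm (w - gam^-1 *: a) ^+ 2
  = gam / 2 * dot w w - dot w a + (2 * gam)^-1 * dot a a.
Proof.
move=> g0; rewrite enorm_sq dot_subsq !dotZr dotZl; field.
by rewrite g0.
Qed.

Lemma prox_bound (gam : R) a v z : 0 < gam -> subdiff g a v ->
  is_prox (fconj g) gam^-1 (gam^-1 *: a) z ->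
  [/\ fconj g z \is a fin_num, dot z z <= dot v v &
     fine (g a) - gam / 2 * dot v v <= dot z a - fine (fconj g z) - gam / 2 * dot z z].
Proof.
move=> g0 sv Hp.
have ga := sv.1.
have Hv := fconj_subdiff sv.
have Hz := fconj_ge z a.
have H := Hp v. rewrite Hv in H. rewrite !quad_id in H; try by rewrite gt_eqF.
rewrite -(fineK ga) in H Hz.
have fz : fconj g z \is a fin_num.
  rewrite fin_numE; apply/andP; split.
  - apply/eqP => e; rewrite e in Hz.
    by rewrite -EFinB leeNy_eq in Hz.
  - apply/eqP => e; rewrite e in H.
    by rewrite addye // -EFinB -EFinD leye_eq in H.
rewrite -(fineK fz) in H Hz.
rewrite -EFinB -!EFinD lee_fin in H.
rewrite -EFinB lee_fin in Hz.
split => //; first nra.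
lra.
Qed.

End Conj.


Section Cont.
Variable R : realType.
Variable m : nat.

Lemma dot_sq_continuous (a : 'rV[R]_m) :
  continuous (fun y : 'rV[R]_m => dot (y - a) (y - a)).
Proof.
have -> : (fun y : 'rV[R]_m => dot (y - a) (y - a)) =
   (fun y => \big[+%R/0]_(j <- index_enum 'I_m) ((y 0 j - a 0 j) * (y 0 j - a 0 j))).
  by apply: funext => y; rewrite dotE; apply: eq_bigr => j _; rewrite !mxE.
apply: continuous_big; first exact: add_continuous.
move=> j _ y.
have hc : {for y, continuous (fun y : 'rV[R]_m => y 0 j - a 0 j)}.
  apply: (@continuousB _ _ _ (fun y : 'rV[R]_m => y 0 j) (fun=> a 0 j)).
    exact: coord_continuous.
  exact: cst_continuous.
exact: (continuousM hc hc).
Qed.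

End Cont.

Section Lsc.
Variable R : realType.
Variable m : nat.
Variable g : 'rV[R]_m -> \bar R.
Hypothesis gNy : forall x, g x <> -oo%E.
Hypothesis glsc : elsc g.

Lemma phi_lsc (c : R) (a : 'rV[R]_m) :
  lower_semicontinuous (fun y => g y + (c * dot (y - a) (y - a))%:E)%E.
Proof.
move=> x b Hb.
set qx := c * dot (x - a) (x - a).
have [e [e0 Hge]] : exists e : R, 0 < e /\ ((b - qx + e)%:E < g x)%E.
  move: Hb; case E: (g x) => [r| |] /=.
  - rewrite -EFinD lte_fin => Hb; exists ((r + qx - b) / 2); split.
      rewrite /qx; lra.
    rewrite lte_fin /qx; lra.
  - by move=> _; exists 1; split => //; exact: ltey.
  - by case: (gNy E).
have N1 := glsc Hge.
have qc : {for x, continuous (fun y : 'rV[R]_m => c * dot (y - a) (y - a))}.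
  apply: (@continuousM _ _ (fun=> c) (fun y : 'rV[R]_m => dot (y - a) (y - a))).
    exact: cst_continuous.
  exact: dot_sq_continuous.
have N2 : \forall y \near x, `|qx - c * dot (y - a) (y - a)| < e.
  exact: (cvgr_dist_lt _ _ qc _ e0).
exists [set y | (b%:E < g y + (c * dot (y - a) (y - a))%:E)%E]; last by [].
apply: filterS2 N1 N2 => y H1 /= H2.
move: H2; rewrite ltr_norml => /andP[H2 H3].
move: H1; case E: (g y) => [r| |] /=.
- rewrite lte_fin => H1; rewrite -EFinD lte_fin; clearbody qx; lra.
- by move=> _; rewrite addye // ltey.
- by case: (gNy E).
Qed.

End Lsc.

Section MinExists.
Variable R : realType.
Variable m : nat.
Variable g : 'rV[R]_m -> \bar R.
Hypothesis gNy : forall x, g x <> -oo%E.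
Hypothesis glsc : elsc g.
Variables (a0 v0 : 'rV[R]_m).
Hypothesis sv0 : subdiff g a0 v0.

Lemma quad_shift (gam : R) (a y : 'rV[R]_m) : gam != 0 ->
  (2 * gam)^-1 * dot (y - (a - gam *: v0)) (y - (a - gam *: v0)) =
  (2 * gam)^-1 * dot (y - a) (y - a) + dot (y - a) v0 + gam / 2 * dot v0 v0.
Proof.
move=> g0.
have -> : y - (a - gam *: v0) = (y - a) + gam *: v0 by rewrite opprD opprK addrA.
rewrite dot_addsq !dotZr dotZl; field; by rewrite g0.
Qed.

Lemma phi_lower (gam : R) (a y : 'rV[R]_m) : 0 < gam ->
  ((fine (g a0) + dot v0 (a - a0) - gam / 2 * dot v0 v0
    + (2 * gam)^-1 * dot (y - (a - gam *: v0)) (y - (a - gam *: v0)))%:E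
   <= g y + ((2 * gam)^-1 * dot (y - a) (y - a))%:E)%E.
Proof.
move=> g0; rewrite quad_shift ?gt_eqF //.
case: sv0 => ga H; have := H y; rewrite -(fineK ga).
case E: (g y) => [r| |] /=.
- rewrite -EFinD lee_fin => Hr; rewrite -EFinD lee_fin.
  have : dot v0 (y - a0) = dot v0 (a - a0) + dot (y - a) v0.
    by rewrite !dotBr dotBl (dotC y) (dotC a); ring.
  lra.
- by move=> _; rewrite addye // leey.
- by case: (gNy E).
Qed.

Lemma min_exists (gam : R) (a : 'rV[R]_m) : 0 < gam ->
  exists p, g p \is a fin_num /\
    forall y, (g p + ((2 * gam)^-1 * dot (p - a) (p - a))%:E
               <= g y + ((2 * gam)^-1 * dot (y - a) (y - a))%:E)%E.
Proof.
move=> g0.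
set c := (2 * gam)^-1.
set o := a - gam *: v0.
set lb := fine (g a0) + dot v0 (a - a0) - gam / 2 * dot v0 v0.
pose phi := fun y => (g y + (c * dot (y - a) (y - a))%:E)%E.
have c0 : 0 < c by rewrite /c invr_gt0 mulr_gt0.
have Hlow : forall y, ((lb + c * dot (y - o) (y - o))%:E <= phi y)%E.
  by move=> y; exact: phi_lower.
have Hlow' : forall y, (lb%:E <= phi y)%E.
  move=> y; apply: le_trans (Hlow y); rewrite lee_fin lerDl.
  by apply: mulr_ge0; [exact: ltW | exact: dot_ge0].
set M := ereal_inf (range phi).
have Mlb : (lb%:E <= M)%E by apply: le_ereal_inf_tmp => _ [y _ <-]; exact: Hlow'.
have ga0 := sv0.1.
have Mub : (M <= phi a0)%E by apply: ge_ereal_inf; exists (phi a0) => //; exists a0.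
have Mfin : M \is a fin_num.
  rewrite fin_numE; apply/andP; split; apply/eqP => e; rewrite e in Mlb Mub.
    by rewrite leeNy_eq in Mlb.
  by move: Mub; rewrite /phi -(fineK ga0) -EFinD leye_eq.
set mr := fine M.
have HM : M = mr%:E by rewrite /mr fineK.
have Hinf : forall y, (mr%:E <= phi y)%E.
  by move=> y; rewrite -HM; apply: ge_ereal_inf; exists (phi y) => //; exists y.
have Happ : forall e, 0 < e -> exists y, (phi y < (mr + e)%:E)%E.
  move=> e e0; have : (M < (mr + e)%:E)%E by rewrite HM lte_fin ltrDl.
  by move/ereal_inf_lt => [_ [y _ <-] Hy]; exists y.
pose F := filter_from [set e : R | 0 < e] (fun e => [set y | (phi y < (mr + e)%:E)%E]).
have FF : ProperFilter F.
  apply: filter_from_proper.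
    apply: filter_from_filter; first by exists 1 => /=.
    move=> i j /= i0 j0; exists (Num.min i j); first by rewrite /= lt_min i0 j0.
    move=> y /= Hy; split; apply: (lt_le_trans Hy); rewrite lee_fin lerD2l ge_min lexx //.
    by rewrite orbT.
  by move=> e /= e0; have [y Hy] := Happ e e0; exists y.
set Aset := [set y | (phi y <= (mr + 1)%:E)%E].
have FA : F Aset by exists 1 => //= y /ltW.
have cA : compact Aset.
  set B := (mr + 1 - lb) * (2 * gam).
  apply: (@subclosed_compact _ _
    [set v : 'rV[R]_m | forall i, `[o 0 i - (B + 1), o 0 i + (B + 1)]%classic (v ord0 i)]).
  - have -> : Aset = ~` [set y | ((mr + 1)%:E < phi y)%E].
      by rewrite /Aset predeqE => y /=; rewrite leNgt; split => /negP.
    apply: open_closedC.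
    exact: (proj1 (lower_semicontinuousP _) (phi_lsc (c:=c) (a:=a) gNy glsc) (mr + 1)).
  - apply: (@rV_compact _ m (fun i => `[o 0 i - (B + 1), o 0 i + (B + 1)]%classic)).
    by move=> i; exact: segment_compact.
  - move=> y Ay i /=; rewrite in_itv /=.
    have H1 := le_trans (Hlow y) Ay; rewrite lee_fin in H1.
    have H2 := coord_sq_le (y - o) i.
    clearbody o; rewrite !mxE in H2.
    have H3 : dot (y - o) (y - o) = (2 * gam) * (c * dot (y - o) (y - o)).
      by rewrite mulrA /c mulfV ?mul1r // gt_eqF // mulr_gt0.
    have H4 : dot (y - o) (y - o) <= B.
      rewrite H3 /B; rewrite [X in _ <= X]mulrC; apply: ler_wpM2l.
        by rewrite mulr_ge0 // ltW.
      lra.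
    set t := y ord0 i - o 0 i in H2.
    have : t ^+ 2 <= B by apply: le_trans H2 H4.
    have -> : y ord0 i = t + o 0 i by rewrite /t subrK.
    rewrite expr2 => Ht.
    apply/andP; split; nra.
have [p [Ap Cp]] := cA F FF FA.
have Hp : (phi p <= mr%:E)%E.
  rewrite leNgt; apply/negP => Hlt.
  have [b [mb bp]] : exists b : R, mr < b /\ (b%:E < phi p)%E.
    move: Hlt; case E: (phi p) => [r| |] //.
    - rewrite lte_fin => Hr; exists ((mr + r) / 2); split; first lra.
      rewrite lte_fin; lra.
    - by move=> _; exists (mr + 1); split; [lra | exact: ltey].
  have [V NV HV] := phi_lsc (c:=c) (a:=a) gNy glsc bp.
  have FB : F [set y | (phi y < b%:E)%E].
    exists (b - mr) => /=; first lra.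
    by move=> y /=; rewrite addrC subrK.
  have [y [Hy1 Hy2]] := Cp _ _ FB NV.
  by have := HV y Hy2; move=> /(lt_trans Hy1); rewrite ltxx.
exists p; split; last by move=> y; exact: le_trans Hp (Hinf y).
move: Hp; rewrite /phi fin_numE; case E: (g p) => [r| |] //=.
by case: (gNy E).
Qed.

End MinExists.


Lemma lim0_le (R : realType) (X Y : R) :
  (forall t, 0 < t < 1 -> 0 <= t * (X + t * Y)) -> 0 <= Y -> 0 <= X.
Proof.
move=> H Y0; rewrite leNgt; apply/negP => X0.
set D := -2 * X + Y.
have D0 : 0 < D by rewrite /D; lra.
set t := - X / D.
have E1 : t * D = - X by rewrite /t mulfVK // gt_eqF.
have t0 : 0 < t by rewrite /t divr_gt0 // oppr_gt0.
have t1 : t < 1.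
  rewrite /t ltr_pdivrMr // mul1r /D; lra.
have E2 : D * (X + t * Y) = - 2 * X ^+ 2.
  by rewrite mulrDr mulrA (mulrC D t) E1 /D; ring.
have : X + t * Y < 0.
  rewrite -(pmulr_rlt0 _ D0) E2.
  have : 0 < X ^+ 2 by rewrite expr2 nmulr_rgt0.
  lra.
rewrite -(pmulr_rlt0 _ t0) => H'.
have := H t; rewrite t0 t1 => /(_ isT); lra.
Qed.

Section Opt.
Variable R : realType.
Variable m : nat.
Variable g : 'rV[R]_m -> \bar R.
Hypothesis gNy : forall x, g x <> -oo%E.
Hypothesis gcvx : econvex g.

Lemma opt_subdiff (gam : R) (a p : 'rV[R]_m) : 0 < gam -> g p \is a fin_num ->
  (forall y, (g p + ((2 * gam)^-1 * dot (p - a) (p - a))%:E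
               <= g y + ((2 * gam)^-1 * dot (y - a) (y - a))%:E)%E) ->
  subdiff g p (gam^-1 *: (a - p)).
Proof.
move=> g0 pfin Hmin; split => // w.
case Ew: (g w) => [gw| |]; last by case: (gNy Ew).
  2: by rewrite leey.
set gp := fine (g p).
have gpE : g p = gp%:E by rewrite /gp fineK.
rewrite gpE -EFinD lee_fin.
set c := (2 * gam)^-1.
set d := dot (p - a) (w - p).
set N := dot (w - p) (w - p).
have key : forall t, 0 < t < 1 -> 0 <= t * ((gw - gp + 2 * c * d) + t * (c * N)).
  move=> t t01.
  have Hc := gcvx w p t01.
  rewrite Ew gpE -!EFinM -EFinD in Hc.
  have Hm := Hmin (t *: w + (1 - t) *: p).
  have Hm2 := le_trans Hm (leeD2r _ Hc).
  rewrite gpE -!EFinD lee_fin in Hm2.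
  have E : t *: w + (1 - t) *: p - a = (p - a) + t *: (w - p).
    by apply/rowP => i; rewrite !mxE; ring.
  rewrite E (dot_addsq (p - a) (t *: (w - p))) !dotZr dotZl -/d -/N in Hm2.
  have -> : t * (gw - gp + 2 * c * d + t * (c * N)) =
     t * (gw - gp) + c * (2 * (t * d) + t * (t * N)) by ring.
  rewrite -/c in Hm2; lra.
have N0 : 0 <= c * N by rewrite mulr_ge0 ?dot_ge0 // invr_ge0 mulr_ge0 // ltW.
have := lim0_le key N0.
rewrite dotZl.
have -> : dot (a - p) (w - p) = - d by rewrite /d -dotNl opprB.
have -> : 2 * c = gam^-1 by rewrite /c; field; rewrite gt_eqF.
lra.
Qed.

End Opt.

Section ProxEx.
Variable R : realType.
Variable m : nat.
Variable g : 'rV[R]_m -> \bar R.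
Hypothesis gNy : forall x, g x <> -oo%E.
Hypothesis gcvx : econvex g.
Hypothesis glsc : elsc g.
Variables (a0 v0 : 'rV[R]_m).
Hypothesis sv0 : subdiff g a0 v0.

Lemma prox_exists (gam : R) (a : 'rV[R]_m) : 0 < gam ->
  exists z, is_prox (fconj g) gam^-1 (gam^-1 *: a) z.
Proof.
move=> g0.
have [p [pfin Hmin]] := min_exists gNy glsc sv0 a g0.
set z := gam^-1 *: (a - p).
have sz : subdiff g p z := opt_subdiff gNy gcvx g0 pfin Hmin.
exists z => w.
rewrite (fconj_subdiff sz).
have Hw := fconj_ge g w p.
apply: le_trans (leeD2r _ Hw).
set gp := fine (g p).
have gpE : g p = gp%:E by rewrite /gp fineK.
rewrite gpE -!EFinB -!EFinD lee_fin !quad_id ?gt_eqF //.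
have E : dot w p - gp + (gam / 2 * dot w w - dot w a + (2 * gam)^-1 * dot a a)
   - (dot z p - gp + (gam / 2 * dot z z - dot z a + (2 * gam)^-1 * dot a a))
   = gam / 2 * dot (w - z) (w - z).
  rewrite /z !dotBl !dotBr !dotZl !dotZr !dotBl !dotBr.
  rewrite (dotC p a) (dotC p w) (dotC a w).
  field; by rewrite gt_eqF.
move: E.
have : 0 <= gam / 2 * dot (w - z) (w - z) by rewrite mulr_ge0 ?dot_ge0 // divr_ge0 // ltW.
lra.
Qed.

End ProxEx.


Lemma geo_small (R : realType) (q e : R) : 0 < q < 1 -> 0 < e -> exists j, q ^+ j <= e.
Proof.
move=> /andP[q0 q1] e0.
have qn : `|q| < 1 by rewrite ger0_norm ?ltW.
have H := @cvg_geometric R 1 q qn.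
have : \forall n \near \oo, `|0 - geometric 1 q n| < e by exact: (cvgr_dist_lt _ _ H _ e0).
move=> /filter_ex [j Hj]; exists j; apply: ltW; move: Hj.
by rewrite /geometric /= sub0r normrN mul1r ger0_norm // exprn_ge0 // ltW.
Qed.

Section Cond.
Variable R : realType.
Variables (n s p : nat).
Variable S : set 'rV[R]_n.
Variable A : 'M[R]_(n, s).
Variable K : 'M[R]_(n, p).
Variable g : 'rV[R]_s -> \bar R.
Variable h : 'rV[R]_n -> R.
Variable f : 'rV[R]_p -> \bar R.
Variables (ell alpha q : R).
Hypothesis gNy : forall x, g x <> -oo%E.
Hypothesis gcvx : econvex g.
Hypothesis glsc : elsc g.
Hypothesis hsub : forall x, S x -> exists z, subdiff g (x *m A) z.
Hypothesis hdist : forall x, S x -> dist0_subdiff g (x *m A) <= ell.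
Hypothesis fint : forall x, S x -> interior (edom f) (x *m K).
Hypothesis fpos : forall x, S x -> (0 < f (x *m K))%E.
Hypothesis alpha0 : 0 < alpha.
Hypothesis alpha_le : forall x, S x -> g (x *m A) \is a fin_num ->
  alpha <= fine (g (x *m A)) + h x.

Lemma good_v x : S x -> exists v, subdiff g (x *m A) v /\ enorm v < ell + 1.
Proof.
move=> Sx.
have [z0 hz0] := hsub Sx.
have ne : [set enorm z | z in subdiff g (x *m A)] !=set0 by exists (enorm z0), z0.
have lt : dist0_subdiff g (x *m A) < ell + 1 by apply: le_lt_trans (hdist Sx) _; rewrite ltrDl.
have [_ [v hv <-] Hv] := inf_lt ne lt.
by exists v.
Qed.

Lemma z_bound x (gam : R) z : S x -> 0 < gam ->
  is_prox (fconj g) gam^-1 (gam^-1 *: (x *m A)) z -> enorm z < ell + 1.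
Proof.
move=> Sx g0 Hp.
have [v [sv vl]] := good_v Sx.
have [_ zv _] := prox_bound g0 sv Hp.
exact: le_lt_trans (enorm_le_dot zv) vl.
Qed.

Lemma cond_holds x' u' (dk gk : R) j : S x' -> 0 <= dk -> 0 < gk ->
  gk * q ^+ j <= alpha / (ell + 1) ^+ 2 -> 0 < q ->
  fsps_cond S A K g h f q x' u' dk gk j.
Proof.
move=> Sx dk0 gk0 small q0.
set gam := gk * q ^+ j.
have g0 : 0 < gam by rewrite /gam mulr_gt0 // exprn_gt0.
have [v [sv vl]] := good_v Sx.
have [a0 [v0 sv0]] : exists a0 v0, subdiff g a0 v0 by exists (x' *m A), v.
have [z Hz] := prox_exists gNy gcvx glsc sv0 (x' *m A) g0.
exists z; split => //.
have [fz zv Hineq] := prox_bound g0 sv Hz.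
have ga := sv.1.
have al := alpha_le Sx ga.
have ell1 : 0 < ell + 1 by apply: le_lt_trans (enorm_ge0 v) vl.
have vv : dot v v < (ell + 1) ^+ 2 := dot_lt_enorm vl.
have gsm : gam * (ell + 1) ^+ 2 <= alpha by rewrite -ler_pdivlMr // exprn_gt0.
have gv : gam * dot v v <= gam * (ell + 1) ^+ 2 by rewrite ler_pM2l // ltW.
have fK : f (x' *m K) \is a fin_num.
  rewrite fin_numE; apply/andP; split.
    by apply/eqP => e; have := fpos Sx; rewrite e.
  apply/eqP => e; have := interior_subset (fint Sx); rewrite /edom /= e.
  by rewrite ltxx.
have fK0 : 0 < fine (f (x' *m K)).
  by have := fpos Sx; rewrite -(fineK fK) lte_fin.
rewrite /fsps_theta /Psi /Defs.indic asboolT // adde0.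
rewrite -(fineK fz) -EFinB -EFinM lte_fin.
apply: mulr_gt0; last by rewrite invr_gt0.
rewrite !enorm_sq.
have : 0 <= dk / 2 * dot (x' - u') (x' - u') by rewrite mulr_ge0 ?dot_ge0 // divr_ge0.
rewrite -/gam => D; clearbody gam.
have h1 : gam / 2 * dot v v <= alpha / 2 by lra.
set G := fine (g (x' *m A)) in Hineq al.
set Z := dot z (x' *m A) in Hineq *.
set Fz := fine (fconj g z) in Hineq *.
set ZZ := dot z z in Hineq *.
set VV := dot v v in Hineq h1 *.
set H := h x' in al *.
set DD := dk / 2 * dot (x' - u') (x' - u') in D *.
clearbody G Z Fz ZZ VV H DD.
have h2 : G - alpha / 2 <= Z - Fz - gam / 2 * ZZ by lra.
have h3 : alpha / 2 <= Z - Fz - gam / 2 * ZZ + H by lra.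
have h4 : 0 < alpha / 2 by rewrite divr_gt0.
lra.
Qed.

End Cond.

Unset Implicit Arguments. Set Strict Implicit. Set Printing Implicit Defensive.


Theorem lemma4p3 (R : realType) (n s p : nat) (S : set 'rV[R]_n)
  (A : 'M[R]_(n, s)) (K : 'M[R]_(n, p)) (g : 'rV[R]_s -> \bar R)
  (h : 'rV[R]_n -> R) (gradh : 'rV[R]_n -> 'rV[R]_n) (L : R)
  (f : 'rV[R]_p -> \bar R) (ell : R)
  (beta nu q delta0 theta0 eps : R)
  (x0 : 'rV[R]_n) (z0 : 'rV[R]_s) (u0 : 'rV[R]_n) :
  fsps_setting S A K g h gradh L f ell ->
  0 < beta < 2 -> 0 < nu -> 0 < q < 1 -> 0 < delta0 -> 0 < theta0 -> 0 < eps ->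
  S x0 ->
  (* (ii), first part: the search for j_k terminates at every iteration *)
  (forall (x : nat -> 'rV[R]_n) (z : nat -> 'rV[R]_s) (u : nat -> 'rV[R]_n)
          (y : nat -> 'rV[R]_p) (j : nat -> nat) (theta delta gamma : nat -> R)
          (N : nat),
      fsps_run_upto S A K g h gradh L f beta nu q eps delta0 theta0 x0 z0 u0
        x z u y j theta delta gamma N ->
      forall (y' : 'rV[R]_p) (x' u' : 'rV[R]_n),
        fsps_pre S A K gradh f beta (x N) (z N) (u N) (theta N) (delta N) y' x' u' ->
        exists jN : nat, fsps_cond S A K g h f q x' u' (delta N) (gamma N) jN)
  /\
  (forall (x : nat -> 'rV[R]_n) (z : nat -> 'rV[R]_s) (u : nat -> 'rV[R]_n)
          (y : nat -> 'rV[R]_p) (j : nat -> nat) (theta delta gamma : nat -> R),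
      (forall N, fsps_run_upto S A K g h gradh L f beta nu q eps delta0 theta0 x0 z0 u0
                   x z u y j theta delta gamma N) ->
      (* (i) *)
      (forall k, enorm (z k.+1) <= ell + 1)
      (* (ii), second part *)
      /\ (forall k, gamma k.+1 <= gamma k)
      (* (iii) *)
      /\ (exists gam : R, 0 < gam /\ exists K0 : nat, forall k, (K0 <= k)%N ->
            [/\ gamma k = gam,
                delta k = 2 * nu + L + 2 * opnorm A ^+ 2 / gam
              & enorm (z k.+1) <= Num.min (eps / gam) (Num.sqrt (2 * eps / gam))])).
Proof.
move=> Hset /andP[b0 b2] nu0 /andP[q0 q1] d00 th00 eps0 Sx0.
case: Hset => [[S0 [Scvx Scpt]] [[gfin gNy] [gcvx glsc]] [U [Uo [SU [hg [L0 hl]]]]]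
  [[ffin fNy] [fcvx [flsc [fint fpos]]]] [[xa [Sxa dga]] inf0 hsub ell0 hdist]].
set I := ereal_inf [set (g (x *m A) + (h x)%:E)%E | x in S].
have [z00 sz00] := hsub x0 Sx0.
have Ifin : I \is a fin_num.
  rewrite fin_numE; apply/andP; split; apply/eqP => e.
    by move: inf0; rewrite -/I e.
  have : (I <= g (x0 *m A) + (h x0)%:E)%E.
    by apply: ge_ereal_inf; exists (g (x0 *m A) + (h x0)%:E)%E => //; exists x0.
  by rewrite e -(fineK sz00.1) -EFinD leye_eq.
set alpha := fine I.
have alpha0 : 0 < alpha by rewrite -lte_fin /alpha fineK.
have alpha_le : forall x, S x -> g (x *m A) \is a fin_num ->
    alpha <= fine (g (x *m A)) + h x.
  move=> x Sx gf; rewrite -lee_fin /alpha fineK // EFinD fineK //.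
  by apply: ge_ereal_inf; exists (g (x *m A) + (h x)%:E)%E => //; exists x.
have cond := cond_holds gNy gcvx glsc hsub hdist fint fpos alpha0 alpha_le.
have ell1 : 0 < ell + 1 by rewrite ltr_pwDl.
set c1 := alpha / (ell + 1) ^+ 2.
have c10 : 0 < c1 by rewrite divr_gt0 // exprn_gt0.
have runpos : forall x z u y j theta delta gamma N,
    fsps_run_upto S A K g h gradh L f beta nu q eps delta0 theta0 x0 z0 u0
      x z u y j theta delta gamma N ->
    forall k, (k <= N)%N -> 0 < gamma k /\ 0 <= delta k.
  move=> x z u y j theta delta gamma N [_ _ _ [_ d0 g0] Hst].
  elim => [|k IH] kN; first by rewrite g0 d0; split => //; exact: ltW.
  have [gk0 _] := IH (ltnW kN).
  case: (Hst k kN) => _ _ _ Hg Hd.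
  have gk1 : 0 < gamma k.+1.
    rewrite Hg; case: ifP => _; rewrite ?mulr_gt0 // exprn_gt0 //.
  split => //; rewrite Hd.
  apply: addr_ge0; first lra.
  by apply: divr_ge0; [apply: mulr_ge0 => //; exact: sqr_ge0 | exact: ltW].
split.
  move=> x z u y j theta delta gamma N Hrun y' x' u' [_ [Sx' _] _].
  have [gN0 dN0] := runpos _ _ _ _ _ _ _ _ _ Hrun N (leqnn N).
  have q01 : 0 < q < 1 by rewrite q0 q1.
  have [jj Hjj] := geo_small q01 (divr_gt0 c10 gN0).
  exists jj; apply: cond => //.
  by rewrite mulrC -ler_pdivlMr.
move=> x z u y j theta delta gamma Hrun.
have Hst : forall k, fsps_step S A K g h gradh L f beta nu q eps
    (x k) (z k) (u k) (theta k) (delta k) (gamma k)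
    (y k.+1) (x k.+1) (z k.+1) (u k.+1) (j k) (theta k.+1) (delta k.+1) (gamma k.+1).
  by move=> k; case: (Hrun k.+1) => _ _ _ _ H; exact: H k (ltnSn k).
have g0 : gamma 0%N = 1 by case: (Hrun 0%N) => _ _ _ [].
have pos : forall k, 0 < gamma k /\ 0 <= delta k.
  by move=> k; exact: runpos _ _ _ _ _ _ _ _ _ (Hrun k) k (leqnn k).
have Hk : forall k, [/\ S (x k.+1),
    is_prox (fconj g) (gamma k * q ^+ j k)^-1
      ((gamma k * q ^+ j k)^-1 *: (x k.+1 *m A)) (z k.+1),
    (forall j', (j' < j k)%N ->
       ~ fsps_cond S A K g h f q (x k.+1) (u k.+1) (delta k) (gamma k) j'),
    gamma k.+1 = (if Num.min (eps / (gamma k * q ^+ j k))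
                     (Num.sqrt (2 * eps / (gamma k * q ^+ j k))) < enorm (z k.+1)
                  then gamma k * q ^+ j k * q else gamma k * q ^+ j k)
    & delta k.+1 = 2 * nu + L + 2 * opnorm A ^+ 2 / gamma k.+1].
  by move=> k; case: (Hst k) => [[_ [Sx _] _] [_ Hm] [Hp _] Hg Hd]; split.
have gkj0 : forall k, 0 < gamma k * q ^+ j k.
  by move=> k; rewrite mulr_gt0 ?(pos k).1 // exprn_gt0.
have zlt : forall k, enorm (z k.+1) < ell + 1.
  move=> k; case: (Hk k) => Sx Hp _ _ _.
  exact: (z_bound hsub hdist Sx (gkj0 k) Hp).
have qj1 : forall i, q ^+ i <= 1 by move=> i; rewrite exprn_ile1 // ltW.
have qj0 : forall i, 0 <= q ^+ i by move=> i; rewrite exprn_ge0 // ltW.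
have qjq : forall i, (0 < i)%N -> q ^+ i <= q.
  case=> // i _; rewrite exprS ger_pMr //; exact: qj1.
have F2 : forall k, gamma k.+1 <= gamma k.
  move=> k; case: (Hk k) => _ _ _ Hg _; have gk := (pos k).1.
  have := qj1 (j k); have := qj0 (j k).
  rewrite Hg; case: ifP => _; set a := q ^+ j k => a0 a1.
    by rewrite -mulrA ger_pMr //; nra.
  by rewrite ger_pMr.
split.
  by move=> k; exact: ltW (zlt k).
split; first exact: F2.
have F3 : forall k, gamma k.+1 <> gamma k -> gamma k.+1 <= q * gamma k.
  move=> k Hne; case: (Hk k) => _ _ _ Hg _; have gk := (pos k).1.
  move: Hne; rewrite Hg; case: ifP => _.
    move=> _; rewrite [X in X <= _]mulrC ler_pM2l // ger_pMr //; exact: qj1.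
  case E: (j k) => [|i].
    by rewrite expr0 mulr1.
  move=> _; rewrite mulrC ler_pM2r //; exact: qjq.
set c2 := Num.min (eps / (ell + 1)) (2 * eps / (ell + 1) ^+ 2).
set c := Num.min c1 c2.
have c0 : 0 < c.
  by rewrite /c /c2 !lt_min c10 !divr_gt0 // ?exprn_gt0 // mulr_gt0.
have F4 : forall k, gamma k <= c -> gamma k.+1 = gamma k.
  move=> k gc; case: (Hk k) => Sx Hp Hm Hg _; have gk := (pos k).1.
  have jk0 : j k = 0%N.
    case E: (j k) => [//|i]; exfalso.
    apply: (Hm 0%N); first by rewrite E.
    apply: cond => //; first exact: (pos k).2.
    rewrite expr0 mulr1; apply: le_trans gc _; by rewrite /c ge_min lexx.
  have gc2 : gamma k <= c2 by apply: le_trans gc _; rewrite /c ge_min lexx orbT.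
  rewrite Hg jk0 expr0 mulr1; case: ifP => // Hlt; exfalso.
  have zb := zlt k; rewrite jk0 in Hp.
  have H1 : ell + 1 <= eps / gamma k.
    rewrite ler_pdivlMr // mulrC -ler_pdivlMr //.
    by apply: le_trans gc2 _; rewrite /c2 ge_min lexx.
  have H2 : ell + 1 <= Num.sqrt (2 * eps / gamma k).
    rewrite -(ger0_norm (ltW ell1)) -sqrtr_sqr ler_sqrt; last first.
      by rewrite divr_ge0 // ltW // mulr_gt0.
    rewrite ler_pdivlMr // mulrC -ler_pdivlMr ?exprn_gt0 //.
    by apply: le_trans gc2 _; rewrite /c2 ge_min lexx orbT.
  move: Hlt; apply/negP; rewrite -leNgt le_min.
  by rewrite (le_trans (ltW zb) H1) (le_trans (ltW zb) H2).
have F5 : forall k, gamma k.+1 = gamma k ->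
    enorm (z k.+1) <= Num.min (eps / gamma k) (Num.sqrt (2 * eps / gamma k)).
  move=> k E; case: (Hk k) => _ _ _ Hg _; have gk := (pos k).1.
  move: Hg; case: ifP => Hlt Hg.
    exfalso; move: E; rewrite Hg => E.
    have : gamma k * q ^+ j k * q < gamma k.
      rewrite -mulrA gtr_pMr //.
      by apply: le_lt_trans (ler_pM (qj0 _) (ltW q0) (qj1 (j k)) (lexx q)) _; rewrite mul1r.
    by rewrite E ltxx.
  have gE : gamma k * q ^+ j k = gamma k by rewrite -Hg E.
  by rewrite gE in Hlt; rewrite leNgt Hlt.
have mono : forall k k', (k <= k')%N -> gamma k' <= gamma k.
  move=> k k' /subnK <-; elim: (k' - k)%N => [|d IH]; first by rewrite add0n.
  by rewrite addSn; apply: le_trans (F2 _) IH.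
have [K0 HK] : exists K0, forall k, (K0 <= k)%N -> gamma k.+1 = gamma k.
  apply: contrapT => Hno.
  have Hchg : forall K1, exists k, (K1 <= k)%N /\ gamma k.+1 <> gamma k.
    move=> K1; apply: contrapT => H1; apply: Hno; exists K1 => k Kk.
    by apply: contrapT => H2; apply: H1; exists k.
  have Hpow : forall mm, exists K1, gamma K1 <= q ^+ mm.
    elim => [|mm [K1 HK1]]; first by exists 0%N; rewrite g0 expr0.
    have [k [Kk Hk']] := Hchg K1; exists k.+1.
    apply: le_trans (F3 k Hk') _; rewrite exprS ler_pM2l //.
    exact: le_trans (mono _ _ Kk) HK1.
  have q01 : 0 < q < 1 by rewrite q0 q1.
  have [mm Hmm] := geo_small q01 c0.
  have [K1 HK1] := Hpow mm.
  have [k [Kk Hk']] := Hchg K1.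
  by apply: Hk'; apply: F4; apply: le_trans (mono _ _ Kk) (le_trans HK1 Hmm).
have const : forall k, (K0 <= k)%N -> gamma k = gamma K0.
  move=> k /subnK <-; elim: (k - K0)%N => [|d IH]; first by rewrite add0n.
  by rewrite addSn HK ?IH // leq_addl.
exists (gamma K0); split; first exact: (pos K0).1.
exists K0.+1 => k Kk.
have Kk' : (K0 <= k)%N by apply: ltnW.
split.
- exact: const.
- case: k Kk Kk' => [//|k'] Kk Kk'.
  by case: (Hk k') => _ _ _ _ ->; rewrite (const k'.+1 Kk').
- by have := F5 k (HK k Kk'); rewrite (const k Kk').
Qed.
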